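(* For every integer $k\ge1$, \begin{align*} \sum_{n=1}^\infty\frac{H_n^{(k)}}{n^3}&=\zeta(k+3)+\zeta(3,k),\\ \sum_{n=1}^\infty\frac{P_k(H_n,\dots,H_n^{(k)})}{n^3}&=\zeta(k+2,1)+\zeta(k+1,1,1),\\ \sum_{n=1}^\infty\frac{Q_k(H_n,\dots,H_n^{(k)})}{n^3}&=\zeta(k+3)+\sum_{j=2}^{k+1}S^T_{k+3,j}. \end{align*}
   Context: $H_n^{(r)}=\sum_{t=1}^n t^{-r}$, $H_n=H_n^{(1)}$. For $n\ge1$, $P_n(y_1,\dots,y_n)=\sum_{m_1+2m_2+\cdots=n}\frac{(-1)^{m_2+m_4+\cdots}}{m_1!m_2!\cdots}\prod_{i\ge1}(y_i/i)^{m_i}$ and $Q_n(y_1,\dots,y_n)=\sum_{m_1+2m_2+\cdots=n}\frac{1}{m_1!m_2!\cdots}\prod_{i\ge1}(y_i/i)^{m_i}$. Multiple zeta values: $\zeta(a_1,\dots,a_k)=\sum_{n_1>\cdots>n_k\ge1}n_1^{-a_1}\cdots n_k^{-a_k}$ ($a_r\ge1$, $a_1\ge2$), of weight $a_1+\cdots+a_k$ and depth $k$. $S^T_{N,d}$ is the sum of all multiple zeta values $\zeta(a_1,\dots,a_d)$ of weight $N$ and depth $d$ with $a_1\ge3$. *)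

(* Defs.v *)
From Stdlib Require Import Reals List Arith Lia ClassicalEpsilon.
Import ListNotations.
Open Scope R_scope.

Definition sum1 (n : nat) (f : nat -> R) : R :=
  fold_right Rplus 0 (map f (seq 1 n)).

Definition Hn (n r : nat) : R := sum1 n (fun t => / (INR t ^ r)).

Fixpoint tuples (len b : nat) : list (list nat) :=
  match len with
  | O => [[]]
  | S l => flat_map (fun x => map (cons x) (tuples l b)) (seq 0 (S b))
  end.

Fixpoint weight_from (i : nat) (m : list nat) : nat :=
  match m with
  | [] => O
  | x :: r => (i * x + weight_from (S i) r)%nat
  end.

(* multiplicity vectors [m_1; ...; m_n] with m_1 + 2 m_2 + ... + n m_n = n
   (i.e. the partitions of n; m_i = 0 necessarily for i > n) *)
Definition part_vectors (n : nat) : list (list nat) :=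
  filter (fun m => Nat.eqb (weight_from 1 m) n) (tuples n n).

Fixpoint PQterm (signed : bool) (i : nat) (m : list nat) (y : nat -> R) : R :=
  match m with
  | [] => 1
  | x :: r =>
      (if andb signed (Nat.even i) then (-1) ^ x else 1)
      * / INR (fact x) * (y i / INR i) ^ x * PQterm signed (S i) r y
  end.

Definition Ppoly (n : nat) (y : nat -> R) : R :=
  fold_right Rplus 0 (map (fun m => PQterm true 1 m y) (part_vectors n)).

Definition Qpoly (n : nat) (y : nat -> R) : R :=
  fold_right Rplus 0 (map (fun m => PQterm false 1 m y) (part_vectors n)).

(* truncated multiple zeta value:
   sum_{N >= n_1 > n_2 > ... > n_k >= 1} n_1^{-a_1} ... n_k^{-a_k} *)
Fixpoint mzvN (a : list nat) (N : nat) : R :=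
  match a with
  | [] => 1
  | a1 :: r => sum1 N (fun n => / (INR n ^ a1) * mzvN r (n - 1))
  end.

Definition mzv (a : list nat) : R :=
  epsilon (inhabits 0) (fun l => Un_cv (mzvN a) l).

Fixpoint compositions (N d : nat) : list (list nat) :=
  match d with
  | O => if Nat.eqb N 0 then [[]] else []
  | S d' => flat_map (fun a => map (cons a) (compositions (N - a) d')) (seq 1 N)
  end.

Definition ST (N d : nat) : R :=
  fold_right Rplus 0
    (map mzv (filter (fun a => Nat.leb 3 (hd O a)) (compositions N d))).

(* Main.v *)
Require Import Defs.
From Stdlib Require Import Reals List Arith Lia Lra ClassicalEpsilon.
Import ListNotations.
Open Scope R_scope.


Definition lsum {A : Type} (l : list A) (f : A -> R) : R := fold_right Rplus 0 (map f l).

Lemma lsum_nil {A} (f : A -> R) : lsum [] f = 0.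
Proof. reflexivity. Qed.
Lemma lsum_cons {A} (a : A) l f : lsum (a :: l) f = f a + lsum l f.
Proof. reflexivity. Qed.
Lemma lsum_app {A} (l1 l2 : list A) f : lsum (l1 ++ l2) f = lsum l1 f + lsum l2 f.
Proof. induction l1; simpl; [ unfold lsum; simpl; ring | rewrite !lsum_cons, IHl1; ring]. Qed.
Lemma lsum_ext_in {A} (l : list A) f g : (forall x, In x l -> f x = g x) -> lsum l f = lsum l g.
Proof. induction l; intros H; [reflexivity|]. rewrite !lsum_cons, H, IHl; auto; [intros; apply H; simpl; auto| simpl; auto]. Qed.
Lemma lsum_ext {A} (l : list A) f g : (forall x, f x = g x) -> lsum l f = lsum l g.
Proof. intros; apply lsum_ext_in; auto. Qed.
Lemma lsum_plus {A} (l : list A) f g : lsum l (fun x => f x + g x) = lsum l f + lsum l g.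
Proof. induction l; [unfold lsum; simpl; ring|]. rewrite !lsum_cons, IHl; ring. Qed.
Lemma lsum_scal {A} (l : list A) c f : lsum l (fun x => c * f x) = c * lsum l f.
Proof. induction l; [unfold lsum; simpl; ring|]. rewrite !lsum_cons, IHl; ring. Qed.
Lemma lsum_zero {A} (l : list A) f : (forall x, In x l -> f x = 0) -> lsum l f = 0.
Proof. intros H; rewrite (lsum_ext_in l f (fun _ => 0)); auto. induction l; [reflexivity|]. rewrite lsum_cons, IHl; [ring|]. intros; apply H; simpl; auto. Qed.
Lemma lsum_map {A B} (h : A -> B) l f : lsum (map h l) f = lsum l (fun x => f (h x)).
Proof. unfold lsum; rewrite map_map; reflexivity. Qed.
Lemma lsum_flat_map {A B} (g : A -> list B) l f : lsum (flat_map g l) f = lsum l (fun x => lsum (g x) f).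
Proof. induction l; [reflexivity|]. cbn [flat_map]. rewrite lsum_app, lsum_cons, IHl. reflexivity. Qed.
Lemma lsum_filter {A} (p : A -> bool) l f : lsum (filter p l) f = lsum l (fun x => if p x then f x else 0).
Proof. induction l; [reflexivity|]. rewrite lsum_cons. cbn [filter]. destruct (p a); [rewrite lsum_cons|]; rewrite IHl; ring. Qed.
Lemma lsum_swap {A B} (l1 : list A) (l2 : list B) F :
  lsum l1 (fun i => lsum l2 (fun x => F i x)) = lsum l2 (fun x => lsum l1 (fun i => F i x)).
Proof. induction l1. - rewrite lsum_nil; symmetry; apply lsum_zero; reflexivity. - rewrite lsum_cons, IHl1, <- lsum_plus. reflexivity. Qed.
Lemma lsum_le {A} (l : list A) f g : (forall x, In x l -> f x <= g x) -> lsum l f <= lsum l g.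
Proof. induction l; intros H; [unfold lsum; simpl; lra|]. rewrite !lsum_cons. assert (f a <= g a) by (apply H; simpl; auto).
  assert (lsum l f <= lsum l g) by (apply IHl; intros; apply H; simpl; auto). lra. Qed.
Lemma lsum_nonneg {A} (l : list A) f : (forall x, In x l -> 0 <= f x) -> 0 <= lsum l f.
Proof. intros H. replace 0 with (lsum l (fun _ => 0)) by (apply lsum_zero; auto). apply lsum_le; auto. Qed.

Lemma fold_Rplus_c (l : list R) c : fold_right Rplus c l = fold_right Rplus 0 l + c.
Proof. induction l; simpl; [ring| rewrite IHl; ring]. Qed.
Lemma sum1_0 f : sum1 0 f = 0.
Proof. reflexivity. Qed.
Lemma sum1_S n f : sum1 (S n) f = sum1 n f + f (S n).
Proof. unfold sum1. rewrite seq_S, map_app, fold_right_app. simpl. rewrite fold_Rplus_c. ring. Qed.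
Lemma sum1_ext n f g : (forall t, (1 <= t)%nat -> f t = g t) -> sum1 n f = sum1 n g.
Proof. induction n; intros H; [reflexivity|]. rewrite !sum1_S, IHn, H; auto; lia. Qed.

Definition W (l : list nat) (m : nat) : R :=
  match l with
  | [] => if Nat.eqb m 0 then 1 else 0
  | a :: r => if Nat.eqb m 0 then 0 else / (INR m ^ a) * mzvN r (m - 1)
  end.

Lemma mzvN_nil N : mzvN [] N = 1.
Proof. reflexivity. Qed.
Lemma mzvN_S a r N : mzvN (a :: r) (S N) = mzvN (a :: r) N + / (INR (S N) ^ a) * mzvN r N.
Proof. simpl mzvN at 1. rewrite sum1_S. simpl. rewrite Nat.sub_0_r. reflexivity. Qed.
Lemma mzvN_0 a r : mzvN (a :: r) 0 = 0.
Proof. reflexivity. Qed.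

Lemma mzvN_W l N : mzvN l N = sum_f_R0 (W l) N.
Proof. destruct l as [|a r].
 - induction N; [reflexivity|]. change (sum_f_R0 (W []) (S N)) with (sum_f_R0 (W []) N + W [] (S N)). rewrite <- IHN. simpl. ring.
 - induction N. simpl. reflexivity. rewrite mzvN_S, IHN. simpl sum_f_R0 at 2. f_equal. simpl. rewrite Nat.sub_0_r. reflexivity. Qed.

Lemma W_S l N : mzvN l (S N) = mzvN l N + W l (S N).
Proof. rewrite !mzvN_W. reflexivity. Qed.

Lemma INR_S_pos n : 0 < INR (S n).
Proof. apply lt_0_INR; lia. Qed.

Lemma pow_inv_pos x a : 0 < x -> 0 < / x ^ a.
Proof. intros; apply Rinv_0_lt_compat, pow_lt; auto. Qed.

Lemma mzvN_nonneg l N : 0 <= mzvN l N.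
Proof. revert N; induction l as [|a r IH]; intros N; [simpl; lra|].
  induction N; [rewrite mzvN_0; lra|]. rewrite mzvN_S. specialize (IH N).
  assert (0 < / INR (S N) ^ a) by (apply pow_inv_pos, INR_S_pos). nra. Qed.
Lemma W_nonneg l m : 0 <= W l m.
Proof. destruct l as [|a r]; simpl; destruct (Nat.eqb m 0) eqn:E; try lra.
   apply Rmult_le_pos. left; apply pow_inv_pos. apply lt_0_INR. apply Nat.eqb_neq in E; lia.
   apply mzvN_nonneg.
Qed.
Lemma W_cons_S a r n : W (a :: r) (S n) = / INR (S n) ^ a * mzvN r n.
Proof. unfold W. simpl Nat.eqb. cbv iota. f_equal. f_equal. lia. Qed.

Definition C (m n : nat) : R := INR (fact m) * INR (fact n) / INR (fact (m + n)).

Lemma C_pos m n : 0 < C m n.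
Proof. unfold C. pose proof (lt_0_INR _ (lt_O_fact m)). pose proof (lt_0_INR _ (lt_O_fact n)).
  pose proof (lt_0_INR _ (lt_O_fact (m+n))). apply Rdiv_lt_0_compat; nra. Qed.

Lemma C_0 m : C m 0 = 1.
Proof. unfold C. rewrite Nat.add_0_r. change (fact 0) with 1%nat. rewrite INR_1. field. apply INR_fact_neq_0. Qed.

Lemma C_sym m n : C m n = C n m.
Proof. unfold C, Rdiv. rewrite (Nat.add_comm m n). ring. Qed.

Lemma C_rec m n : C m (S n) * INR (m + S n) = C m n * INR (S n).
Proof. unfold C. rewrite Nat.add_succ_r. rewrite (fact_simpl (m+n)), (fact_simpl n).
  rewrite !mult_INR. rewrite <- Nat.add_succ_r.
  field. split; [apply INR_fact_neq_0|]. apply not_0_INR. lia. Qed.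

Lemma C_dec m n : C m (S n) <= C m n.
Proof. pose proof (C_rec m n). pose proof (C_pos m (S n)). pose proof (C_pos m n).
  assert (INR (S n) <= INR (m + S n)) by (apply le_INR; lia).
  assert (0 < INR (S n)) by apply INR_S_pos. nra. Qed.

Lemma C_diff m n : INR (S n) * (C m n - C m (S n)) = INR m * C m (S n).
Proof. pose proof (C_rec m n). rewrite plus_INR in H. nra. Qed.

Lemma C_bound m n : (1 <= m)%nat -> C m n * INR (S n) <= 1.
Proof. intros Hm. induction n.
 - rewrite C_0. simpl. lra.
 - pose proof (C_rec m n). pose proof (C_pos m (S n)).
   assert (INR (S (S n)) <= INR (m + S n)) by (apply le_INR; lia).
   nra. Qed.

Definition Zf (k l : list nat) (N M : nat) : R :=
  sum_f_R0 (fun m => W k m * sum_f_R0 (fun n => C m n * W l n) M) N.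

Lemma sum_swap (f : nat -> nat -> R) N M :
  sum_f_R0 (fun m => sum_f_R0 (fun n => f m n) M) N = sum_f_R0 (fun n => sum_f_R0 (fun m => f m n) N) M.
Proof. induction N; simpl. reflexivity. rewrite IHN, <- sum_plus. reflexivity. Qed.

Lemma Zf_swap k l N M : Zf k l N M = Zf l k M N.
Proof. unfold Zf.
  transitivity (sum_f_R0 (fun m => sum_f_R0 (fun n => W k m * C m n * W l n) M) N).
  { apply sum_eq; intros. rewrite scal_sum. apply sum_eq; intros. ring. }
  rewrite sum_swap. apply sum_eq; intros. rewrite scal_sum. apply sum_eq; intros. rewrite C_sym. ring. Qed.

Lemma Zf_nil_r a r N M : Zf (a :: r) [] N M = mzvN (a :: r) N.
Proof. unfold Zf. rewrite mzvN_W. apply sum_eq; intros i Hi.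
  replace (sum_f_R0 (fun n => C i n * W [] n) M) with 1. ring.
  induction M. - cbn [sum_f_R0]. rewrite C_0. simpl. ring. - cbn [sum_f_R0]. rewrite <- IHM. simpl W. ring. Qed.

Lemma Zf_nil_l a r N M : Zf [] (a :: r) N M = mzvN (a :: r) M.
Proof. rewrite Zf_swap. apply Zf_nil_r. Qed.

Definition dom (A B : nat -> nat -> R) : Prop :=
  forall N M eps, eps > 0 -> exists N' M', A N M <= B N' M' + eps.
Definition equiv A B := dom A B /\ dom B A.

Lemma dom_trans A B D : dom A B -> dom B D -> dom A D.
Proof. intros H1 H2 N M eps He. destruct (H1 N M (eps/2)) as (N1 & M1 & h1); [lra|].
  destruct (H2 N1 M1 (eps/2)) as (N2 & M2 & h2); [lra|]. exists N2, M2. lra. Qed.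
Lemma dom_le A B : (forall N M, A N M <= B N M) -> dom A B.
Proof. intros H N M eps He. exists N, M. specialize (H N M). lra. Qed.
Lemma equiv_trans A B D : equiv A B -> equiv B D -> equiv A D.
Proof. intros [] []; split; eapply dom_trans; eauto. Qed.
Lemma equiv_sym A B : equiv A B -> equiv B A.
Proof. intros []; split; auto. Qed.
Lemma dom_swap A B : dom A B -> dom (fun N M => A M N) (fun N M => B M N).
Proof. intros H N M eps He. destruct (H M N eps He) as (N' & M' & h). exists M', N'. auto. Qed.
Lemma equiv_swap A B : equiv A B -> equiv (fun N M => A M N) (fun N M => B M N).
Proof. intros []; split; apply dom_swap; auto. Qed.

Lemma key_inner l m M : (1 <= m)%nat ->
  INR m * sum_f_R0 (fun n => C m n * W (1%nat :: l) n) M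
  = sum_f_R0 (fun n => C m n * W l n) M - C m M * mzvN l M.
Proof. intros Hm. induction M.
 - rewrite mzvN_W. cbn [sum_f_R0]. change (W (1%nat::l) 0) with 0. ring.
 - cbn [sum_f_R0]. rewrite Rmult_plus_distr_l, IHM. rewrite W_S.
   rewrite W_cons_S, pow_1.
   pose proof (C_diff m M). pose proof (INR_S_pos M).
   replace (INR m * (C m (S M) * (/ INR (S M) * mzvN l M))) with ((INR m * C m (S M)) / INR (S M) * mzvN l M) by (field; lra).
   rewrite <- H. field. lra. Qed.

Lemma W_shift a k m : W (a :: k) m = INR m * W (S a :: k) m.
Proof. unfold W. destruct (Nat.eqb m 0) eqn:E. ring. apply Nat.eqb_neq in E.
  simpl pow. assert (INR m <> 0) by (apply not_0_INR; auto). field. split; auto. apply pow_nonzero; auto. Qed.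

Lemma W_0 a k : W (a :: k) 0 = 0.
Proof. reflexivity. Qed.

Lemma T1_eq a k l N M : Zf (a :: k) (1%nat :: l) N M =
  Zf (S a :: k) l N M - sum_f_R0 (fun m => W (S a :: k) m * C m M) N * mzvN l M.
Proof. unfold Zf. rewrite (Rmult_comm _ (mzvN l M)), scal_sum, <- minus_sum. apply sum_eq; intros m _.
  destruct m. rewrite !W_0. ring.
  rewrite W_shift, (Rmult_comm (INR (S m))), Rmult_assoc, key_inner by lia. ring. Qed.

Lemma D_mono l m M M' : (M <= M')%nat ->
  sum_f_R0 (fun n => C m n * W l n) M - C m M' * mzvN l M <=
  sum_f_R0 (fun n => C m n * W l n) M' - C m M' * mzvN l M'.
Proof. intros H. induction H. lra.
  simpl sum_f_R0. rewrite W_S.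
  pose proof (C_dec m m0). pose proof (mzvN_nonneg l M). 
  assert (mzvN l M <= mzvN l m0).
  { clear -H. induction H. lra. rewrite W_S. pose proof (W_nonneg l (S m)). lra. }
  nra. Qed.

Lemma T1 a k l : equiv (Zf (S a :: k) l) (Zf (a :: k) (1%nat :: l)).
Proof. split.
 - intros N M eps He.
   set (K := mzvN (S a :: k) N * mzvN l M).
   assert (HK : 0 <= K) by (apply Rmult_le_pos; apply mzvN_nonneg).
   destruct (archimed (K / eps)) as [Ha _].
   destruct (INR_unbounded (Rmax (INR M) (K/eps))) as [M' HM'].
   exists N, M'. 
   assert (HMM : (M <= M')%nat). { apply INR_le. pose proof (Rmax_l (INR M) (K/eps)). lra. }
   assert (Hk : K / eps < INR M') by (pose proof (Rmax_r (INR M) (K/eps)); lra).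
   unfold Zf.
   assert (HB : sum_f_R0 (fun m => W (a :: k) m * sum_f_R0 (fun n => C m n * W (1%nat :: l) n) M') N >=
                sum_f_R0 (fun m => W (S a :: k) m * sum_f_R0 (fun n => C m n * W l n) M) N
                - sum_f_R0 (fun m => W (S a :: k) m * C m M') N * mzvN l M).
   { rewrite (Rmult_comm _ (mzvN l M)), scal_sum, <- minus_sum. apply Rle_ge, sum_Rle; intros m _.
     destruct m. rewrite !W_0. lra.
     rewrite (W_shift a k (S m)), (Rmult_comm (INR (S m))), (Rmult_assoc (W (S a :: k) (S m)) (INR (S m))), key_inner by lia.
     pose proof (D_mono l (S m) M M' HMM). pose proof (W_nonneg (S a :: k) (S m)). nra. }
   assert (HE1 : sum_f_R0 (fun m => W (S a :: k) m * C m M') N <= mzvN (S a :: k) N * / INR (S M')).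
   { rewrite mzvN_W, Rmult_comm, scal_sum. apply sum_Rle; intros m _. destruct m. rewrite W_0; lra.
     pose proof (C_bound (S m) M' ltac:(lia)). pose proof (INR_S_pos M').
     assert (C (S m) M' <= / INR (S M')).
     { apply Rmult_le_reg_r with (INR (S M')); auto. rewrite Rinv_l by lra. auto. }
     pose proof (W_nonneg (S a :: k) (S m)). nra. }
   assert (HE : sum_f_R0 (fun m => W (S a :: k) m * C m M') N * mzvN l M <= K / INR (S M')).
   { apply Rle_trans with (mzvN (S a :: k) N * / INR (S M') * mzvN l M).
     apply Rmult_le_compat_r; auto. apply mzvN_nonneg. unfold K, Rdiv. right; ring. }
   assert (HKe : K / INR (S M') < eps).
   { pose proof (INR_S_pos M'). rewrite S_INR in *.
     assert (K < INR M' * eps).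
     { apply Rmult_lt_compat_r with (r := eps) in Hk; [|lra]. unfold Rdiv in Hk.
       rewrite Rmult_assoc, Rinv_l, Rmult_1_r in Hk by lra. auto. }
     apply Rmult_lt_reg_r with (INR M' + 1); auto. unfold Rdiv. rewrite Rmult_assoc, Rinv_l, Rmult_1_r by lra. nra. }
   lra.
 - apply dom_le. intros N M. rewrite T1_eq.
   assert (0 <= sum_f_R0 (fun m => W (S a :: k) m * C m M) N * mzvN l M).
   { apply Rmult_le_pos; [|apply mzvN_nonneg]. apply cond_pos_sum. intros. pose proof (C_pos n M).
     pose proof (W_nonneg (S a :: k) n). nra. }
   lra.
Qed.

Lemma T2 b k l : equiv (Zf k (S b :: l)) (Zf (1%nat :: k) (b :: l)).
Proof. destruct (T1 b l k) as [H1 H2]. split; intros N M eps He.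
  - destruct (H1 M N eps He) as (N' & M' & h). exists M', N'. rewrite !(Zf_swap k), (Zf_swap (1%nat::k)). auto.
  - destruct (H2 M N eps He) as (N' & M' & h). exists M', N'. rewrite !(Zf_swap k), (Zf_swap (1%nat::k)). auto.
Qed.

Lemma G1 j : forall c k l, equiv (Zf ((j + c)%nat :: k) l) (Zf (c :: k) (repeat 1%nat j ++ l)).
Proof. induction j; intros c k l.
 - simpl. split; apply dom_le; intros; lra.
 - replace (S j + c)%nat with (j + S c)%nat by lia.
   eapply equiv_trans. apply IHj. apply T1. Qed.

Lemma G2 j : forall c k l, equiv (Zf (repeat 1%nat j ++ k) (S c :: l)) (Zf k (S (j + c) :: l)).
Proof. induction j; intros c k l.
 - simpl. split; apply dom_le; intros; lra.
 - simpl repeat. simpl app. eapply equiv_trans. apply equiv_sym. apply T2.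
   replace (S (S j + c)) with (S (j + S c)) by lia. apply IHj. Qed.

Lemma DUAL a b : equiv (Zf (S (S a) :: repeat 1%nat b) []) (Zf [] (S (S b) :: repeat 1%nat a)).
Proof. eapply equiv_trans.
  replace (S (S a)) with (S a + 1)%nat by lia. apply G1.
  pose proof (G2 (S b) 0 [] (repeat 1%nat a)). rewrite app_nil_r in H.
  replace (S (S b + 0)) with (S (S b)) in H by lia. simpl repeat in *. rewrite app_nil_r. exact H. Qed.

Lemma ub_transfer (f g : nat -> R) K :
  dom (fun N M => f N) (fun N M => g M) -> (forall M, g M <= K) -> forall N, f N <= K.
Proof. intros H Hg N. apply Rnot_lt_le; intros Hc.
  destruct (H N 0%nat ((f N - K)/2)) as (N' & M' & h). lra. specialize (Hg M'). lra. Qed.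

Lemma lim_le_ub (u : nat -> R) l K : Un_cv u l -> (forall n, u n <= K) -> l <= K.
Proof. intros H Hu. apply Rnot_lt_le; intros Hc. destruct (H (l - K)) as (N & hN). lra.
  specialize (hN N (le_n _)). specialize (Hu N). unfold R_dist in hN. apply Rabs_def2 in hN. lra. Qed.

Lemma mzvN_growing l : Un_growing (mzvN l).
Proof. intros n. rewrite W_S. pose proof (W_nonneg l (S n)). lra. Qed.

Lemma mzv_spec l L : Un_cv (mzvN l) L -> mzv l = L.
Proof. intros H. unfold mzv. pose proof (epsilon_spec (inhabits 0) (fun L => Un_cv (mzvN l) L) (ex_intro _ L H)) as H2.
  apply (UL_sequence _ _ _ H2 H). Qed.

Lemma zeta_single_bound j M : (2 <= j)%nat -> mzvN [j] M <= 2.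
Proof. intros Hj. assert (H : forall M, (1 <= M)%nat -> mzvN [j] M <= 2 - / INR M).
 { intros M0 HM0. induction HM0.
   - rewrite W_S. rewrite mzvN_0, W_cons_S. simpl. 
     rewrite pow1, Rinv_1. lra.
   - rewrite W_S, W_cons_S, mzvN_nil, Rmult_1_r.
     assert (Hm : 0 < INR m) by (apply lt_0_INR; lia).
     assert (/ INR (S m) ^ j <= / INR (S m) ^ 2).
     { apply Rinv_le_contravar. apply pow_lt, INR_S_pos. apply Rle_pow. rewrite S_INR; lra. auto. }
     assert (/ INR (S m) ^ 2 <= / INR m - / INR (S m)).
     { rewrite S_INR. replace (/ INR m - / (INR m + 1)) with (/ (INR m * (INR m + 1))) by (field; lra).
       apply Rinv_le_contravar. nra. simpl; nra. }
     lra. }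
 destruct M. rewrite mzvN_0; lra. specialize (H (S M) ltac:(lia)). pose proof (INR_S_pos M).
 assert (0 < / INR (S M)) by (apply Rinv_0_lt_compat; auto). lra. Qed.

Lemma dual_doms a b :
  equiv (fun N M => mzvN (S (S a) :: repeat 1%nat b) N) (fun N M => mzvN (S (S b) :: repeat 1%nat a) M).
Proof. destruct (DUAL a b) as [H1 H2]. split; intros N M eps He.
 - destruct (H1 N M eps He) as (N' & M' & h). exists N', M'. rewrite Zf_nil_r, Zf_nil_l in h. auto.
 - destruct (H2 N M eps He) as (N' & M' & h). exists N', M'. rewrite Zf_nil_r, Zf_nil_l in h. auto.
Qed.

Lemma bound_2ones b N : mzvN (2%nat :: repeat 1%nat b) N <= 2.
Proof. destruct (dual_doms 0 b) as [H _]. apply (ub_transfer _ _ 2 H). intros M. apply zeta_single_bound. lia. Qed.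

Lemma mzvN_cmp c c' : Forall2 (fun x y => (y <= x)%nat) c c' -> forall N, mzvN c N <= mzvN c' N.
Proof. induction 1; intros N. simpl; lra.
  induction N. rewrite !mzvN_0. lra. rewrite !mzvN_S. pose proof (IHForall2 N).
  assert (/ INR (S N) ^ x <= / INR (S N) ^ y).
  { apply Rinv_le_contravar. apply pow_lt, INR_S_pos. apply Rle_pow. rewrite S_INR. pose proof (pos_INR N); lra. auto. }
  pose proof (mzvN_nonneg l N). pose proof (pow_inv_pos (INR (S N)) y (INR_S_pos N)). nra. Qed.

Lemma mzv_cv a r : (2 <= a)%nat -> Forall (fun x => (1 <= x)%nat) r -> Un_cv (mzvN (a :: r)) (mzv (a :: r)).
Proof. intros Ha Hr.
  assert (Hb : forall N, mzvN (a :: r) N <= 2).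
  { intros N. eapply Rle_trans; [|apply (bound_2ones (length r) N)]. apply mzvN_cmp. constructor; auto.
    clear -Hr. induction Hr; simpl; constructor; auto. }
  destruct (growing_cv (mzvN (a :: r)) (mzvN_growing _)) as [L HL]. exists 2. intros x [N ->]. auto.
  rewrite (mzv_spec _ L HL). auto. Qed.

Lemma repeat1_pos n : Forall (fun x => (1 <= x)%nat) (repeat 1%nat n).
Proof. induction n; simpl; constructor; auto. Qed.

Lemma dual_eq a b : mzv (S (S a) :: repeat 1%nat b) = mzv (S (S b) :: repeat 1%nat a).
Proof. pose proof (mzv_cv (S (S a)) (repeat 1%nat b) ltac:(lia) (repeat1_pos b)) as H1.
  pose proof (mzv_cv (S (S b)) (repeat 1%nat a) ltac:(lia) (repeat1_pos a)) as H2.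
  destruct (dual_doms a b) as [D1 D2].
  apply Rle_antisym.
  - apply (lim_le_ub _ _ _ H1). apply (ub_transfer _ _ _ D1). apply growing_ineq; auto. apply mzvN_growing.
  - apply (lim_le_ub _ _ _ H2). apply (ub_transfer _ _ _ (dom_swap _ _ D2)). apply growing_ineq; auto. apply mzvN_growing.
Qed.

Definition sgn (sg : bool) (i : nat) : R := if andb sg (Nat.even i) then -1 else 1.
Definition fsx (sg : bool) (s x : nat) (y : nat -> R) : R :=
  (if andb sg (Nat.even s) then (-1) ^ x else 1) * / INR (fact x) * (y s / INR s) ^ x.
Definition G sg s L B n y : R :=
  lsum (tuples L B) (fun m => if Nat.eqb (weight_from s m) n then PQterm sg s m y else 0).

Lemma PQterm_cons sg s x r y : PQterm sg s (x :: r) y = fsx sg s x y * PQterm sg (S s) r y.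
Proof. reflexivity. Qed.

Lemma fsx_0 sg s y : fsx sg s 0 y = 1.
Proof. unfold fsx. simpl. destruct (sg && Nat.even s)%bool; simpl; field. Qed.

Lemma KEY sg s x y : (1 <= s)%nat -> INR (s * S x) * fsx sg s (S x) y = sgn sg s * y s * fsx sg s x y.
Proof. intros Hs. unfold fsx, sgn. rewrite fact_simpl, !mult_INR.
  assert (INR s <> 0) by (apply not_0_INR; lia). pose proof (INR_fact_neq_0 x).
  assert (INR (S x) <> 0) by (apply not_0_INR; lia).
  destruct (sg && Nat.even s)%bool; simpl pow; field; auto. Qed.

Lemma G_nil sg s B n y : G sg s 0 B n y = if Nat.eqb 0 n then 1 else 0.
Proof. unfold G. simpl tuples. rewrite lsum_cons, lsum_nil. simpl weight_from. destruct (Nat.eqb 0 n); simpl; ring. Qed.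

Lemma eqb_shift a w n : (a <= n)%nat -> Nat.eqb (a + w) n = Nat.eqb w (n - a).
Proof. intros. destruct (Nat.eqb_spec (a + w) n), (Nat.eqb_spec w (n - a)); auto; lia. Qed.

Lemma G_cons sg s L B n y : G sg s (S L) B n y =
  lsum (seq 0 (S B)) (fun x => if Nat.leb (s * x) n then fsx sg s x y * G sg (S s) L B (n - s * x) y else 0).
Proof. unfold G at 1. change (tuples (S L) B) with (flat_map (fun x => map (cons x) (tuples L B)) (seq 0 (S B))).
  rewrite lsum_flat_map. apply lsum_ext; intros x. rewrite lsum_map.
  destruct (Nat.leb_spec (s * x) n).
  - unfold G. rewrite <- lsum_scal. apply lsum_ext; intros r. simpl weight_from. rewrite eqb_shift by auto.
    destruct (Nat.eqb _ _); [rewrite PQterm_cons|]; ring.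
  - apply lsum_zero; intros r _. simpl weight_from. destruct (Nat.eqb_spec (s * x + weight_from (S s) r) n). lia. auto.
Qed.

Lemma seq0S B : seq 0 (S B) = 0%nat :: map S (seq 0 B).
Proof. rewrite seq_shift. reflexivity. Qed.

Lemma G_L sg B y L : forall s n, (n < s + L)%nat -> G sg s (S L) B n y = G sg s L B n y.
Proof. induction L; intros s n Hn.
 - rewrite G_cons, G_nil, seq0S, lsum_cons, lsum_map. rewrite lsum_zero.
   + rewrite Nat.mul_0_r. simpl Nat.leb. rewrite fsx_0, G_nil, Nat.sub_0_r. ring.
   + intros x _. destruct (Nat.leb_spec (s * S x) n); auto. nia.
 - rewrite !G_cons. apply lsum_ext; intros x. destruct (Nat.leb_spec (s * x) n); auto.
   rewrite IHL by lia. reflexivity. Qed.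

Lemma G_B sg B y L : forall s n, (1 <= s)%nat -> (n <= B)%nat -> G sg s L (S B) n y = G sg s L B n y.
Proof. induction L; intros s n Hs Hn.
 - rewrite !G_nil. auto.
 - rewrite !G_cons. rewrite (seq_S (S B)), lsum_app, lsum_cons, lsum_nil.
   replace (if Nat.leb (s * (0 + S B)) n then _ else 0) with 0.
   + rewrite Rplus_0_r, Rplus_0_r. apply lsum_ext; intros x. destruct (Nat.leb_spec (s * x) n); auto.
     rewrite IHL by lia. reflexivity.
   + destruct (Nat.leb_spec (s * (0 + S B)) n); auto. nia. Qed.

Lemma G_newton sg y B L : forall s n, (1 <= s)%nat -> (n <= B)%nat ->
  INR n * G sg s L B n y = lsum (seq s L) (fun i => if Nat.leb i n then sgn sg i * y i * G sg s L B (n - i) y else 0).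
Proof. induction L; intros s n Hs Hn.
 - rewrite G_nil. simpl seq. rewrite lsum_nil. destruct (Nat.eqb_spec 0 n). subst. simpl; ring. ring.
 - rewrite G_cons.
   transitivity (lsum (seq 0 (S B)) (fun x => if Nat.leb (s * x) n then INR (s * x) * fsx sg s x y * G sg (S s) L B (n - s * x) y else 0)
      + lsum (seq 0 (S B)) (fun x => if Nat.leb (s * x) n then fsx sg s x y * (INR (n - s * x) * G sg (S s) L B (n - s * x) y) else 0)).
   { rewrite <- lsum_plus, <- lsum_scal. apply lsum_ext; intros x. destruct (Nat.leb_spec (s * x) n); [|ring].
     replace (INR n) with (INR (s * x) + INR (n - s * x)) by (rewrite <- plus_INR; f_equal; lia). ring. }
   assert (E2 : lsum (seq 0 (S B)) (fun x => if Nat.leb (s * x) n then fsx sg s x y * (INR (n - s * x) * G sg (S s) L B (n - s * x) y) else 0)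
     = lsum (seq (S s) L) (fun i => if Nat.leb i n then sgn sg i * y i * G sg s (S L) B (n - i) y else 0)).
   { transitivity (lsum (seq 0 (S B)) (fun x => lsum (seq (S s) L) (fun i =>
        if Nat.leb (s * x + i) n then fsx sg s x y * (sgn sg i * y i * G sg (S s) L B (n - s * x - i) y) else 0))).
     { apply lsum_ext; intros x. destruct (Nat.leb_spec (s * x) n).
       - rewrite IHL by lia. rewrite <- lsum_scal. apply lsum_ext; intros i.
         destruct (Nat.leb_spec i (n - s * x)), (Nat.leb_spec (s * x + i) n); try lia; ring.
       - symmetry; apply lsum_zero; intros i _. destruct (Nat.leb_spec (s * x + i) n); auto; lia. }
     rewrite lsum_swap. apply lsum_ext; intros i. destruct (Nat.leb_spec i n).
     - rewrite G_cons, <- lsum_scal. apply lsum_ext; intros x.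
       destruct (Nat.leb_spec (s * x) (n - i)), (Nat.leb_spec (s * x + i) n); try lia; try ring.
       replace (n - i - s * x)%nat with (n - s * x - i)%nat by lia. ring.
     - apply lsum_zero; intros x _. destruct (Nat.leb_spec (s * x + i) n); auto; lia. }
   assert (E1 : lsum (seq 0 (S B)) (fun x => if Nat.leb (s * x) n then INR (s * x) * fsx sg s x y * G sg (S s) L B (n - s * x) y else 0)
     = if Nat.leb s n then sgn sg s * y s * G sg s (S L) B (n - s) y else 0).
   { rewrite seq0S, lsum_cons, lsum_map. rewrite Nat.mul_0_r. simpl Nat.leb. rewrite Rmult_0_l, !Rmult_0_l, Rplus_0_l.
     destruct (Nat.leb_spec s n).
     - rewrite G_cons, seq_S, lsum_app, lsum_cons, lsum_nil.
       replace (if Nat.leb (s * (0 + B)) (n - s) then _ else 0) with 0.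
       2:{ destruct (Nat.leb_spec (s * (0 + B)) (n - s)); auto. nia. }
       rewrite !Rplus_0_r, <- lsum_scal. apply lsum_ext; intros x.
       destruct (Nat.leb_spec (s * S x) n), (Nat.leb_spec (s * x) (n - s)); try nia; try ring.
       rewrite KEY by auto. replace (n - s * S x)%nat with (n - s - s * x)%nat by nia. ring.
     - apply lsum_zero; intros x _. destruct (Nat.leb_spec (s * S x) n); auto; nia. }
   rewrite E1, E2. reflexivity. Qed.

Lemma G_Lj sg B y s L n : (n < s + L)%nat -> forall j, G sg s (L + j) B n y = G sg s L B n y.
Proof. intros Hn j. induction j. rewrite Nat.add_0_r; auto. rewrite Nat.add_succ_r, G_L by lia. auto. Qed.
Lemma G_Bj sg B y s L n : (1 <= s)%nat -> (n <= B)%nat -> forall j, G sg s L (B + j) n y = G sg s L B n y.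
Proof. intros Hs Hn j. induction j. rewrite Nat.add_0_r; auto. rewrite Nat.add_succ_r, G_B by lia. auto. Qed.

Definition PQ sg k y := G sg 1 k k k y.

Lemma Qpoly_PQ k y : Qpoly k y = PQ false k y.
Proof. unfold Qpoly, PQ, G, part_vectors. fold (lsum (filter (fun m => Nat.eqb (weight_from 1 m) k) (tuples k k)) (fun m => PQterm false 1 m y)).
  rewrite lsum_filter. reflexivity. Qed.
Lemma Ppoly_PQ k y : Ppoly k y = PQ true k y.
Proof. unfold Ppoly, PQ, G, part_vectors. fold (lsum (filter (fun m => Nat.eqb (weight_from 1 m) k) (tuples k k)) (fun m => PQterm true 1 m y)).
  rewrite lsum_filter. reflexivity. Qed.

Lemma PQ_0 sg y : PQ sg 0 y = 1.
Proof. unfold PQ. rewrite G_nil. reflexivity. Qed.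

Lemma PQ_newton sg y k : INR k * PQ sg k y = lsum (seq 1 k) (fun i => sgn sg i * y i * PQ sg (k - i) y).
Proof. unfold PQ. rewrite G_newton by lia. apply lsum_ext_in; intros i Hi. apply in_seq in Hi.
  destruct (Nat.leb_spec i k); [|lia]. f_equal.
  replace k with ((k - i) + i)%nat at 1 2 by lia. rewrite G_Bj by lia. rewrite G_Lj by lia. reflexivity. Qed.

Lemma newton_unique (a b c : nat -> R) : a 0%nat = 1 -> b 0%nat = 1 ->
  (forall k, INR k * a k = lsum (seq 1 k) (fun i => c i * a (k - i)%nat)) ->
  (forall k, INR k * b k = lsum (seq 1 k) (fun i => c i * b (k - i)%nat)) -> forall k, a k = b k.
Proof. intros Ha Hb HA HB.
  assert (forall k j, (j <= k)%nat -> a j = b j).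
  { induction k; intros j Hj. replace j with 0%nat by lia. congruence.
    destruct (Nat.eq_dec j (S k)); [|apply IHk; lia]. subst j.
    apply Rmult_eq_reg_l with (INR (S k)); [|apply not_0_INR; lia].
    rewrite HA, HB. apply lsum_ext_in; intros i Hi. apply in_seq in Hi. rewrite IHk by lia. reflexivity. }
  intros k; apply (H k); lia. Qed.

Lemma Hn_0 i : Hn 0 i = 0.
Proof. reflexivity. Qed.
Lemma Hn_S M i : Hn (S M) i = Hn M i + (/ INR (S M)) ^ i.
Proof. unfold Hn. rewrite sum1_S, pow_inv. reflexivity. Qed.

Lemma sgn_true_S i : sgn true (S i) = - sgn true i.
Proof. unfold sgn. rewrite Nat.even_succ, <- Nat.negb_even. destruct (Nat.even i); simpl; ring. Qed.

Definition e k M := mzvN (repeat 1%nat k) M.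

Lemma e_0 M : e 0 M = 1.
Proof. reflexivity. Qed.

Definition em1 j M := match j with 0%nat => 0 | S j' => e j' M end.
Lemma e_step j M : e j (S M) = e j M + / INR (S M) * em1 j M.
Proof. destruct j. simpl. unfold e. simpl. ring. unfold e. simpl repeat. rewrite mzvN_S, pow_1. reflexivity. Qed.

Lemma e_newton M : forall k, INR k * e k M = lsum (seq 1 k) (fun i => sgn true i * Hn M i * e (k - i)%nat M).
Proof. induction M; intros k.
 - rewrite lsum_zero. destruct k. simpl; ring. unfold e. simpl repeat. rewrite mzvN_0. ring.
   intros; rewrite Hn_0; ring.
 - destruct k. change (INR 0) with 0. rewrite Rmult_0_l. reflexivity.
   rewrite e_step. simpl em1.
   set (x := / INR (S M)).
   transitivity (INR (S k) * e (S k) M + x * (INR k * e k M) + x * e k M).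
   { rewrite S_INR. ring. }
   rewrite (IHM (S k)), (IHM k).
   transitivity (lsum (seq 1 (S k)) (fun i => sgn true i * Hn M i * e (S k - i)%nat M)
     + x * lsum (seq 1 (S k)) (fun i => sgn true i * Hn M i * em1 (S k - i)%nat M)
     + (lsum (seq 1 (S k)) (fun i => sgn true i * x ^ i * e (S k - i)%nat M)
        + x * lsum (seq 1 (S k)) (fun i => sgn true i * x ^ i * em1 (S k - i)%nat M))).
   2:{ rewrite <- !lsum_scal, <- !lsum_plus. apply lsum_ext; intros i. rewrite Hn_S, e_step. fold x. ring. }
   assert (Ha : lsum (seq 1 (S k)) (fun i => sgn true i * Hn M i * em1 (S k - i)%nat M)
     = lsum (seq 1 k) (fun i => sgn true i * Hn M i * e (k - i)%nat M)).
   { rewrite seq_S, lsum_app, lsum_cons, lsum_nil. replace (S k - (1 + k))%nat with 0%nat by lia. change (em1 0 M) with 0.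
     rewrite Rmult_0_r, !Rplus_0_r. apply lsum_ext_in; intros i Hi. apply in_seq in Hi.
     replace (S k - i)%nat with (S (k - i)) by lia. reflexivity. }
   assert (Hb : lsum (seq 1 (S k)) (fun i => sgn true i * x ^ i * e (S k - i)%nat M)
        + x * lsum (seq 1 (S k)) (fun i => sgn true i * x ^ i * em1 (S k - i)%nat M) = x * e k M).
   { assert (H2 : lsum (seq 1 (S k)) (fun i => sgn true i * x ^ i * em1 (S k - i)%nat M)
         = lsum (seq 1 k) (fun i => sgn true i * x ^ i * e (k - i)%nat M)).
     { rewrite seq_S, lsum_app, lsum_cons, lsum_nil. replace (S k - (1 + k))%nat with 0%nat by lia. change (em1 0 M) with 0.
       rewrite Rmult_0_r, !Rplus_0_r. apply lsum_ext_in; intros i Hi. apply in_seq in Hi.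
       replace (S k - i)%nat with (S (k - i)) by lia. reflexivity. }
     assert (H1 : lsum (seq 1 (S k)) (fun i => sgn true i * x ^ i * e (S k - i)%nat M)
         = x * e k M + lsum (seq 1 k) (fun i => sgn true (S i) * x ^ (S i) * e (k - i)%nat M)).
     { change (seq 1 (S k)) with (1%nat :: seq 2 k). rewrite lsum_cons.
       rewrite <- (seq_shift k 1), lsum_map. f_equal. unfold sgn; simpl. replace (k - 0)%nat with k by lia. ring. }
     rewrite H1, H2, <- lsum_scal, Rplus_assoc, <- lsum_plus. rewrite lsum_zero. ring.
     intros i _. rewrite sgn_true_S. simpl pow. ring. }
   rewrite Ha, <- Hb. ring. Qed.

Fixpoint hstep (f : nat -> R) (x : R) (k : nat) : R :=
  match k with 0%nat => f 0%nat | S k' => f (S k') + x * hstep f x k' end.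
Fixpoint hh (M k : nat) : R :=
  match M with 0%nat => if Nat.eqb k 0 then 1 else 0 | S M' => hstep (hh M') (/ INR (S M')) k end.

Lemma hh_SS M k : hh (S M) (S k) = hh M (S k) + / INR (S M) * hh (S M) k.
Proof. reflexivity. Qed.
Lemma hh_S0 M : hh (S M) 0 = hh M 0.
Proof. reflexivity. Qed.
Lemma hh_0 M : hh M 0 = 1.
Proof. induction M. reflexivity. rewrite hh_S0; auto. Qed.
Lemma hh_0S k : hh 0 (S k) = 0.
Proof. reflexivity. Qed.

Definition hm1 j M := match j with 0%nat => 0 | S j' => hh (S M) j' end.
Lemma h_step j M : hh (S M) j = hh M j + / INR (S M) * hm1 j M.
Proof. destruct j. simpl hm1. rewrite hh_S0. ring. apply hh_SS. Qed.

Lemma h_newton M : forall k, INR k * hh M k = lsum (seq 1 k) (fun i => Hn M i * hh M (k - i)%nat).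
Proof. induction M; intros k.
 - rewrite lsum_zero. destruct k. change (INR 0) with 0. ring. rewrite hh_0S. ring.
   intros; rewrite Hn_0; ring.
 - induction k as [|k IHk]. change (INR 0) with 0. rewrite Rmult_0_l. reflexivity.
   rewrite hh_SS. set (x := / INR (S M)).
   transitivity (INR (S k) * hh M (S k) + x * (INR k * hh (S M) k) + x * hh (S M) k).
   { rewrite S_INR. ring. }
   rewrite (IHM (S k)), IHk.
   assert (Ha : lsum (seq 1 (S k)) (fun i => Hn M i * hm1 (S k - i)%nat M)
     = lsum (seq 1 k) (fun i => Hn M i * hh (S M) (k - i)%nat)).
   { rewrite seq_S, lsum_app, lsum_cons, lsum_nil. replace (S k - (1 + k))%nat with 0%nat by lia. change (hm1 0 M) with 0.
     rewrite Rmult_0_r, !Rplus_0_r. apply lsum_ext_in; intros i Hi. apply in_seq in Hi.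
     replace (S k - i)%nat with (S (k - i)) by lia. reflexivity. }
   assert (Hb : lsum (seq 1 (S k)) (fun i => x ^ i * hh (S M) (S k - i)%nat)
     = x * hh (S M) k + x * lsum (seq 1 k) (fun i => x ^ i * hh (S M) (k - i)%nat)).
   { change (seq 1 (S k)) with (1%nat :: seq 2 k). rewrite lsum_cons.
     rewrite <- (seq_shift k 1), lsum_map, <- lsum_scal. f_equal. simpl. replace (k - 0)%nat with k by lia. ring.
     apply lsum_ext_in; intros i Hi. replace (S k - S i)%nat with (k - i)%nat by lia. simpl. ring. }
   transitivity (lsum (seq 1 (S k)) (fun i => Hn M i * hh M (S k - i)%nat)
     + x * lsum (seq 1 (S k)) (fun i => Hn M i * hm1 (S k - i)%nat M)
     + lsum (seq 1 (S k)) (fun i => x ^ i * hh (S M) (S k - i)%nat)).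
   2:{ rewrite <- lsum_scal, <- !lsum_plus. apply lsum_ext; intros i. rewrite Hn_S. fold x.
       rewrite (h_step (S k - i)%nat M). fold x. ring. }
   rewrite Ha, Hb.
   assert (Hc : lsum (seq 1 k) (fun i => Hn (S M) i * hh (S M) (k - i)%nat)
     = lsum (seq 1 k) (fun i => Hn M i * hh (S M) (k - i)%nat) + lsum (seq 1 k) (fun i => x ^ i * hh (S M) (k - i)%nat)).
   { rewrite <- lsum_plus. apply lsum_ext; intros i. rewrite Hn_S. fold x. ring. }
   rewrite Hc. ring. Qed.

Lemma inv_pow_S X j : X <> 0 -> / X ^ S j = / X * / X ^ j.
Proof. intros. simpl. rewrite Rinv_mult. reflexivity. Qed.

Lemma hh_S_sum M r : hh (S M) r = hh M r + lsum (seq 1 r) (fun j => / INR (S M) ^ j * hh M (r - j)%nat).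
Proof. pose proof (INR_S_pos M). induction r.
 - rewrite hh_S0. unfold lsum; simpl; ring.
 - rewrite hh_SS, IHr. change (seq 1 (S r)) with (1%nat :: seq 2 r). rewrite lsum_cons.
   rewrite <- (seq_shift r 1), lsum_map. rewrite Rmult_plus_distr_l, <- lsum_scal.
   replace (S r - 1)%nat with r by lia. rewrite pow_1.
   assert (lsum (seq 1 r) (fun j => / INR (S M) * (/ INR (S M) ^ j * hh M (r - j)%nat)) =
           lsum (seq 1 r) (fun x => / INR (S M) ^ S x * hh M (S r - S x)%nat)).
   { apply lsum_ext; intros j. rewrite inv_pow_S by lra. replace (S r - S j)%nat with (r - j)%nat by lia. ring. }
   rewrite H0. ring. Qed.

Lemma flat_map_nil {A B} (f : A -> list B) l : (forall a, In a l -> f a = []) -> flat_map f l = [].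
Proof. induction l; intros H; simpl. reflexivity. rewrite H, IHl; auto; simpl; auto. intros; apply H; simpl; auto. Qed.

Lemma comp_empty d : forall N, (N < d)%nat -> compositions N d = [].
Proof. induction d; intros N H. lia. simpl. apply flat_map_nil. intros a Ha. apply in_seq in Ha.
  rewrite IHd by lia. reflexivity. Qed.

Lemma comp_0 N : compositions N 0 = if Nat.eqb N 0 then [[]] else [].
Proof. reflexivity. Qed.

Lemma comp_S N d : compositions N (S d) = flat_map (fun a => map (cons a) (compositions (N - a) d)) (seq 1 N).
Proof. reflexivity. Qed.

Definition CSd r d M := lsum (compositions r d) (fun c => mzvN c M).
Definition CS r M := lsum (seq 0 (S r)) (fun d => CSd r d M).

Definition Tc (c : list nat) M := match c with [] => 0 | a :: c' => / INR (S M) ^ a * mzvN c' M end.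
Lemma mz_S_split c M : mzvN c (S M) = mzvN c M + Tc c M.
Proof. destruct c. simpl. ring. rewrite mzvN_S. reflexivity. Qed.

Lemma CS_shrink r a M : (1 <= a <= r)%nat -> lsum (seq 0 r) (fun d => CSd (r - a) d M) = CS (r - a) M.
Proof. intros H. replace (seq 0 r) with (seq 0 (S (r - a)) ++ seq (0 + S (r - a)) (a - 1)).
  2:{ rewrite <- seq_app. f_equal. lia. }
  rewrite lsum_app, (lsum_zero (seq (0 + S (r - a)) (a - 1))). unfold CS; ring. intros d Hd. apply in_seq in Hd. unfold CSd. rewrite comp_empty by lia. reflexivity. Qed.

Lemma CS_rec r M : CS r (S M) = CS r M + lsum (seq 1 r) (fun a => / INR (S M) ^ a * CS (r - a) M).
Proof. unfold CS at 1. unfold CSd.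
  transitivity (CS r M + lsum (seq 0 (S r)) (fun d => lsum (compositions r d) (fun c => Tc c M))).
  { unfold CS, CSd. rewrite <- lsum_plus. apply lsum_ext; intros d. rewrite <- lsum_plus. apply lsum_ext; intros c. apply mz_S_split. }
  f_equal. rewrite seq0S, lsum_cons, lsum_map.
  replace (lsum (compositions r 0) (fun c => Tc c M)) with 0.
  2:{ rewrite comp_0. destruct (Nat.eqb r 0); unfold lsum; simpl; ring. }
  rewrite Rplus_0_l.
  transitivity (lsum (seq 0 r) (fun d => lsum (seq 1 r) (fun a => / INR (S M) ^ a * CSd (r - a) d M))).
  { apply lsum_ext; intros d. rewrite comp_S, lsum_flat_map. apply lsum_ext; intros a. rewrite lsum_map.
    unfold CSd. rewrite <- lsum_scal. reflexivity. }
  rewrite lsum_swap. apply lsum_ext_in; intros a Ha. apply in_seq in Ha. rewrite lsum_scal, CS_shrink by lia. reflexivity. Qed.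

Lemma comp_S_cons N d c : In c (compositions N (S d)) -> exists a c', c = a :: c'.
Proof. rewrite comp_S. intros H. apply in_flat_map in H. destruct H as (a & _ & H). apply in_map_iff in H.
  destruct H as (c' & <- & _). eauto. Qed.

Lemma CS_0 r : CS r 0 = if Nat.eqb r 0 then 1 else 0.
Proof. unfold CS. rewrite seq0S, lsum_cons, lsum_map, lsum_zero.
  - unfold CSd. rewrite comp_0. destruct (Nat.eqb r 0); unfold lsum; simpl; ring.
  - intros d _. unfold CSd. apply lsum_zero. intros c Hc. destruct (comp_S_cons _ _ _ Hc) as (a & c' & ->). apply mzvN_0. Qed.

Lemma hh_CS M : forall r, hh M r = CS r M.
Proof. induction M; intros r.
 - rewrite CS_0. destruct r; reflexivity.
 - rewrite hh_S_sum, CS_rec, IHM. f_equal. apply lsum_ext; intros j. rewrite IHM. reflexivity. Qed.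

Lemma cv_shift u l : Un_cv u l -> Un_cv (fun N => u (S N)) l.
Proof. intros H eps He. destruct (H eps He) as (N & hN). exists N. intros n Hn. apply hN. lia. Qed.

Lemma infsum_of_cv s l : Un_cv (sum_f_R0 s) l -> infinite_sum s l.
Proof. intros H. exact H. Qed.

Lemma telescope (s F : nat -> R) : F 0%nat = 0 -> (forall n, s n = F (S n) - F n) -> forall N, sum_f_R0 s N = F (S N).
Proof. intros H0 H N. induction N; simpl. rewrite H, H0. ring. rewrite IHN, H. ring. Qed.

Lemma lsum_cv {A} (l : list A) (f : A -> nat -> R) g :
  (forall c, In c l -> Un_cv (f c) (g c)) -> Un_cv (fun N => lsum l (fun c => f c N)) (lsum l g).
Proof. induction l; intros H.
 - intros eps He. exists 0%nat. intros. unfold R_dist. unfold lsum; simpl. rewrite Rminus_0_r, Rabs_R0. auto.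
 - apply (CV_plus (f a) (fun N => lsum l (fun c => f c N))). apply H; simpl; auto. apply IHl. intros; apply H; simpl; auto. Qed.

Lemma comp_pos d : forall N c, In c (compositions N d) -> Forall (fun x => (1 <= x)%nat) c.
Proof. induction d; intros N c H.
 - rewrite comp_0 in H. destruct (Nat.eqb N 0); simpl in H; [destruct H as [<-|[]]; constructor | destruct H].
 - rewrite comp_S in H. apply in_flat_map in H. destruct H as (a & Ha & H). apply in_map_iff in H.
   destruct H as (c' & <- & Hc'). apply in_seq in Ha. constructor. lia. eapply IHd; eauto. Qed.

Lemma Hn_mzvN n k : Hn n k = mzvN [k] n.
Proof. unfold Hn. simpl. apply sum1_ext. intros; ring. Qed.

Lemma Q_hh k M : Qpoly k (fun i => Hn M i) = hh M k.
Proof. rewrite Qpoly_PQ. refine (newton_unique (fun j => PQ false j (fun i => Hn M i)) (fun j => hh M j) (fun i => sgn false i * Hn M i) _ _ _ _ k).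
  apply PQ_0. apply hh_0. intros; apply PQ_newton.
  intros j. simpl. rewrite h_newton. apply lsum_ext; intros i. unfold sgn; simpl. ring. Qed.

Lemma P_e k M : Ppoly k (fun i => Hn M i) = e k M.
Proof. rewrite Ppoly_PQ. refine (newton_unique (fun j => PQ true j (fun i => Hn M i)) (fun j => e j M) (fun i => sgn true i * Hn M i) _ _ _ _ k).
  apply PQ_0. apply e_0. intros; apply PQ_newton. intros; apply e_newton. Qed.

Lemma inv3 X j : X <> 0 -> / X ^ (j + 3) = / X ^ 3 * / X ^ j.
Proof. intros. rewrite pow_add, Rinv_mult. ring. Qed.

Lemma part1 k : (1 <= k)%nat -> infinite_sum (fun n => Hn (S n) k / INR (S n) ^ 3) (mzv [(k + 3)%nat] + mzv [3%nat; k]).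
Proof. intros Hk. apply infsum_of_cv.
  assert (HF : forall N, sum_f_R0 (fun n => Hn (S n) k / INR (S n) ^ 3) N = mzvN [(k+3)%nat] (S N) + mzvN [3%nat; k] (S N)).
  { apply (telescope _ (fun N => mzvN [(k+3)%nat] N + mzvN [3%nat; k] N)). rewrite !mzvN_0; ring.
    intros n. rewrite !mzvN_S, Hn_mzvN, mzvN_S, mzvN_nil. pose proof (INR_S_pos n).
    rewrite inv3 by lra. unfold Rdiv. set (a := / INR (S n) ^ k). set (b := / INR (S n) ^ 3). ring. }
  intros eps He. assert (Hc : Un_cv (fun N => mzvN [(k+3)%nat] (S N) + mzvN [3%nat; k] (S N)) (mzv [(k + 3)%nat] + mzv [3%nat; k])).
  { apply CV_plus; apply cv_shift; apply mzv_cv; try lia; repeat constructor; lia. }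
  destruct (Hc eps He) as (N & hN). exists N. intros n Hn. rewrite HF. apply hN; auto. Qed.

Lemma part2 k : (1 <= k)%nat -> infinite_sum (fun n => Ppoly k (fun i => Hn (S n) i) / INR (S n) ^ 3)
    (mzv [(k + 2)%nat; 1%nat] + mzv [(k + 1)%nat; 1%nat; 1%nat]).
Proof. intros Hk. destruct k as [|k']; [lia|]. apply infsum_of_cv.
  assert (HF : forall N, sum_f_R0 (fun n => Ppoly (S k') (fun i => Hn (S n) i) / INR (S n) ^ 3) N
     = mzvN (3%nat :: repeat 1%nat (S k')) (S N) + mzvN (4%nat :: repeat 1%nat k') (S N)).
  { apply (telescope _ (fun N => mzvN (3%nat :: repeat 1%nat (S k')) N + mzvN (4%nat :: repeat 1%nat k') N)). rewrite !mzvN_0; ring.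
    intros n. rewrite !mzvN_S, P_e, e_step. simpl em1. unfold e. pose proof (INR_S_pos n).
    replace (/ INR (S n) ^ 4) with (/ INR (S n) ^ 3 * / INR (S n)) by (rewrite <- Rinv_mult; f_equal; simpl; ring).
    unfold Rdiv. set (a := / INR (S n)). set (b := / INR (S n) ^ 3). ring. }
  replace (S k' + 2)%nat with (S (S (S k'))) by lia. replace (S k' + 1)%nat with (S (S k')) by lia.
  change [S (S (S k')); 1%nat] with (S (S (S k')) :: repeat 1%nat 1).
  change [S (S k'); 1%nat; 1%nat] with (S (S k') :: repeat 1%nat 2).
  rewrite <- (dual_eq 1 (S k')), <- (dual_eq 2 k').
  intros eps He. assert (Hc : Un_cv (fun N => mzvN (3%nat :: repeat 1%nat (S k')) (S N) + mzvN (4%nat :: repeat 1%nat k') (S N))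
      (mzv (3%nat :: repeat 1%nat (S k')) + mzv (4%nat :: repeat 1%nat k'))).
  { apply CV_plus; apply cv_shift; apply mzv_cv; try lia; apply repeat1_pos. }
  destruct (Hc eps He) as (N & hN). exists N. intros n Hn. rewrite HF. apply hN; auto. Qed.

Lemma seq_add_map a b n : seq (a + b) n = map (Nat.add a) (seq b n).
Proof. induction a. simpl. rewrite map_id. reflexivity.
  simpl. rewrite <- seq_shift, IHa, map_map. reflexivity. Qed.

Definition pp := fun a : list nat => Nat.leb 3 (hd O a).

Lemma filt_sum k d n : lsum (filter pp (compositions (k + 3) (S d))) (fun c => Tc c n)
  = lsum (seq 0 (S k)) (fun j => / INR (S n) ^ (3 + j) * CSd (k - j) d n).
Proof. rewrite lsum_filter, comp_S, lsum_flat_map.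
  transitivity (lsum (seq 1 (k + 3)) (fun a => if Nat.leb 3 a then / INR (S n) ^ a * CSd (k + 3 - a) d n else 0)).
  { apply lsum_ext; intros a. rewrite lsum_map. unfold pp. simpl hd. destruct (Nat.leb 3 a).
    - unfold CSd. rewrite <- lsum_scal. apply lsum_ext; intros c. reflexivity.
    - apply lsum_zero; auto. }
  replace (k + 3)%nat with (2 + S k)%nat at 1 by lia. rewrite seq_app, lsum_app.
  rewrite (lsum_zero (seq 1 2)). 2:{ intros a Ha. apply in_seq in Ha. destruct (Nat.leb_spec 3 a); auto; lia. }
  rewrite Rplus_0_l. replace (1 + 2)%nat with (3 + 0)%nat by lia. rewrite seq_add_map, lsum_map.
  apply lsum_ext; intros j. destruct (Nat.leb_spec 3 (3 + j)); [|lia]. f_equal. f_equal. lia. Qed.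

Lemma L0 k n : lsum (seq 0 (S k)) (fun j => / INR (S n) ^ (3 + j) * CSd (k - j) 0 n) = / INR (S n) ^ (k + 3).
Proof. rewrite seq_S, lsum_app, (lsum_zero (seq 0 k)). rewrite Rplus_0_l.
  - rewrite lsum_cons, lsum_nil. replace (k - (0 + k))%nat with 0%nat by lia. unfold CSd. rewrite comp_0. simpl Nat.eqb.
    replace (3 + (0 + k))%nat with (k + 3)%nat by lia. unfold lsum; simpl. ring.
  - intros j Hj. apply in_seq in Hj. unfold CSd. rewrite comp_0. destruct (Nat.eqb_spec (k - j) 0). lia. rewrite lsum_nil. ring. Qed.

Lemma key3 k n : Tc [(k + 3)%nat] n + lsum (seq 2 k) (fun d => lsum (filter pp (compositions (k + 3) d)) (fun c => Tc c n))
  = hh (S n) k / INR (S n) ^ 3.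
Proof. pose proof (INR_S_pos n) as HX.
  change (Tc [(k+3)%nat] n) with (/ INR (S n) ^ (k+3) * mzvN [] n). rewrite mzvN_nil, Rmult_1_r, <- (seq_shift k 1), lsum_map.
  rewrite (lsum_ext _ _ _ (fun d => filt_sum k d n)), <- (L0 k n).
  change (lsum (seq 0 (S k)) (fun j => / INR (S n) ^ (3 + j) * CSd (k - j) 0 n) +
     lsum (seq 1 k) (fun d => lsum (seq 0 (S k)) (fun j => / INR (S n) ^ (3 + j) * CSd (k - j) d n)))
   with (lsum (seq 0 (S k)) (fun d => lsum (seq 0 (S k)) (fun j => / INR (S n) ^ (3 + j) * CSd (k - j) d n))).
  rewrite lsum_swap.
  rewrite hh_S_sum. 
  transitivity (lsum (seq 0 (S k)) (fun j => / INR (S n) ^ (3 + j) * CS (k - j) n)).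
  { apply lsum_ext_in; intros j Hj. apply in_seq in Hj. rewrite lsum_scal. f_equal.
    exact (CS_shrink (S k) (S j) n ltac:(lia)). }
  change (seq 0 (S k)) with (0%nat :: seq 1 k). rewrite lsum_cons.
  unfold Rdiv. rewrite Rmult_plus_distr_r, <- hh_CS. rewrite Nat.sub_0_r, Nat.add_0_r.
  f_equal. rewrite Rmult_comm. reflexivity.
  rewrite Rmult_comm, <- lsum_scal. apply lsum_ext; intros j. rewrite hh_CS, pow_add, Rinv_mult. ring. Qed.

Lemma filt_cons c : pp c = true -> exists a r, c = a :: r /\ (3 <= a)%nat.
Proof. destruct c as [|a r]. unfold pp; simpl; discriminate. unfold pp. cbn [hd]. intros H. apply Nat.leb_le in H. eauto. Qed.

Lemma part3 k : (1 <= k)%nat ->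
  infinite_sum (fun n => Qpoly k (fun i => Hn (S n) i) / INR (S n) ^ 3)
    (mzv [(k + 3)%nat]
     + fold_right Rplus 0 (map (fun j => ST (k + 3) j) (seq 2 k))).
Proof. intros Hk. apply infsum_of_cv.
  set (FF := fun N => mzvN [(k + 3)%nat] N + lsum (seq 2 k) (fun d => lsum (filter pp (compositions (k + 3) d)) (fun c => mzvN c N))).
  assert (HF : forall N, sum_f_R0 (fun n => Qpoly k (fun i => Hn (S n) i) / INR (S n) ^ 3) N = FF (S N)).
  { apply telescope.
    - unfold FF. rewrite mzvN_0, lsum_zero. ring. intros d _. apply lsum_zero. intros c Hc.
      apply filter_In in Hc. destruct (filt_cons c (proj2 Hc)) as (a & r & -> & _). apply mzvN_0.
    - intros n. rewrite Q_hh, <- key3. unfold FF. rewrite mz_S_split.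
      assert (lsum (seq 2 k) (fun d => lsum (filter pp (compositions (k + 3) d)) (fun c => mzvN c (S n)))
        = lsum (seq 2 k) (fun d => lsum (filter pp (compositions (k + 3) d)) (fun c => mzvN c n))
          + lsum (seq 2 k) (fun d => lsum (filter pp (compositions (k + 3) d)) (fun c => Tc c n))).
      { rewrite <- lsum_plus. apply lsum_ext; intros d. rewrite <- lsum_plus. apply lsum_ext; intros c. apply mz_S_split. }
      rewrite H. ring. }
  intros eps He.
  assert (Hc : Un_cv (fun N => FF (S N)) (mzv [(k + 3)%nat] + lsum (seq 2 k) (fun d => lsum (filter pp (compositions (k + 3) d)) mzv))).
  { apply cv_shift. unfold FF. apply CV_plus. apply mzv_cv; [lia|constructor].
    apply (lsum_cv (seq 2 k) (fun d N => lsum (filter pp (compositions (k + 3) d)) (fun c => mzvN c N))).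
    intros d _. apply (lsum_cv _ (fun c N => mzvN c N)). intros c Hc. apply filter_In in Hc. destruct Hc as [Hc1 Hc2].
    destruct (filt_cons c Hc2) as (a & r & -> & Ha). apply mzv_cv. lia.
    apply comp_pos in Hc1. inversion Hc1; auto. }
  destruct (Hc eps He) as (N & hN). exists N. intros n Hn. rewrite HF. apply hN; auto. Qed.

Theorem mainTheorem15 (k : nat) (hk : (1 <= k)%nat) :
  infinite_sum (fun n => Hn (S n) k / INR (S n) ^ 3)
    (mzv [(k + 3)%nat] + mzv [3%nat; k])
  /\
  infinite_sum (fun n => Ppoly k (fun i => Hn (S n) i) / INR (S n) ^ 3)
    (mzv [(k + 2)%nat; 1%nat] + mzv [(k + 1)%nat; 1%nat; 1%nat])
  /\
  infinite_sum (fun n => Qpoly k (fun i => Hn (S n) i) / INR (S n) ^ 3)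
    (mzv [(k + 3)%nat]
     + fold_right Rplus 0 (map (fun j => ST (k + 3) j) (seq 2 k))).
Proof. split; [apply part1; auto|split; [apply part2; auto|apply part3; auto]]. Qed.
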